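(* Let $k\ge 2$ and let $G=(\{a,b\},\varphi,a)$ be a D0L-system with $\varphi$ $k$-uniform. Then $G$ is not circular if and only if one of the following holds: (i) $\varphi(a)=\varphi(b)$; (ii) $\varphi(a)=a^k$ or $\varphi(b)=b^k$; (iii) $\varphi(a)=b^k$ and $\varphi(b)=a^k$; (iv) $k=2m+1$ with $m\ge1$, $\varphi(a)=(ab)^ma$ and $\varphi(b)=(ba)^mb$; (v) $k=2m+1$ with $m\ge1$, $\varphi(a)=(ba)^mb$ and $\varphi(b)=(ab)^ma$.
   Context: A D0L-system $G=(\mathcal{A},\varphi,w)$ has language $L(G)=\{\varphi^n(w):n\in\mathbb{N}\}$; $S(L(G))$ is the set of factors of its words. For $u\in S(L(G))$, an interpretation of $u$ is a triple $(p,v,s)$ with $p,s\in\mathcal{A}^*$, $v\in S(L(G))$, $\varphi(v)=pus$. Writing $v=v_1\cdots v_n$, $v'=v'_1\cdots v'_m$, $u=u_1\cdots u_\ell$, interpretations $(p,v,s)$, $(p',v',s')$ are synchronized at position $j$ if there are $i,i'$ with $\varphi(v_1\cdots v_i)=pu_1\cdots u_j$ and $\varphi(v'_1\cdots v'_{i'})=p'u_1\cdots u_j$; $u$ has a synchronizing point at position $j$ if all its interpretations are pairwise synchronized at $j$. A PD0L-system (no letter maps to $\varepsilon$) that is injective on $S(L(G))$ (i.e. $\varphi(u)=\varphi(v)$ with $u,v\in S(L(G))$ implies $u=v$) is circular if there exists $Z$ such that every $u\in S(L(G))$ with $|u|>Z$ has a synchronizing point. A morphism on $\{a,b\}$ is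 $k$-uniform if $|\varphi(a)|=|\varphi(b)|=k$. *)

(* Defs.v *)
From HB Require Import structures.
From mathcomp Require Import all_boot.
Set Implicit Arguments. Unset Strict Implicit. Unset Printing Implicit Defensive.

Inductive letter := la | lb.

Definition letter_eqb (x y : letter) : bool :=
  match x, y with la, la | lb, lb => true | _, _ => false end.
Lemma letter_eqP : Equality.axiom letter_eqb.
Proof. by case; case; constructor. Qed.
HB.instance Definition _ := hasDecEq.Build letter letter_eqP.

Definition word := seq letter.

Definition morph (phi : letter -> word) (w : word) : word := flatten (map phi w).

Definition inL (phi : letter -> word) (w x : word) : Prop :=
  exists n, x = iter n (morph phi) w.

Definition inS (phi : letter -> word) (w u : word) : Prop :=
  exists n, infix u (iter n (morph phi) w).

Definition nonerasing (phi : letter -> word) : Prop :=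
  forall x, phi x <> [::].

Definition injective_on_S (phi : letter -> word) (w : word) : Prop :=
  forall u v, inS phi w u -> inS phi w v -> morph phi u = morph phi v -> u = v.

Definition interpretation (phi : letter -> word) (w : word)
  (u p v s : word) : Prop :=
  inS phi w v /\ morph phi v = p ++ u ++ s.

Definition synchronized_at (phi : letter -> word) (u : word)
  (p v p' v' : word) (j : nat) : Prop :=
  (exists i, i <= size v /\ morph phi (take i v) = p ++ take j u) /\
  (exists i', i' <= size v' /\ morph phi (take i' v') = p' ++ take j u).

Definition sync_point (phi : letter -> word) (w u : word) (j : nat) : Prop :=
  j <= size u /\
  forall p v s p' v' s',
    interpretation phi w u p v s -> interpretation phi w u p' v' s' ->
    synchronized_at phi u p v p' v' j.

Definition circular (phi : letter -> word) (w : word) : Prop :=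
  nonerasing phi /\ injective_on_S phi w /\
  exists Z : nat, forall u, inS phi w u -> Z < size u ->
    exists j, sync_point phi w u j.

Definition uniform (k : nat) (phi : letter -> word) : Prop :=
  size (phi la) = k /\ size (phi lb) = k.

Definition alt (m : nat) (x y : letter) : word := flatten (nseq m [:: x; y]) ++ [:: x].

(* Main.v *)
Require Import Defs.
From mathcomp Require Import all_boot zify.
From Stdlib Require Import Classical Lia.
Set Implicit Arguments. Unset Strict Implicit. Unset Printing Implicit Defensive.

Arguments morph : simpl never.
Lemma morph_cons phi c w : morph phi (c :: w) = phi c ++ morph phi w.
Proof. by []. Qed.
Lemma morph_cat phi u w : morph phi (u ++ w) = morph phi u ++ morph phi w.
Proof. by rewrite /morph map_cat flatten_cat. Qed.
Lemma morph_nil phi : morph phi [::] = [::].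
Proof. by []. Qed.

Lemma size_morph k phi (Hk : forall c, size (phi c) = k) w :
  size (morph phi w) = k * size w.
Proof. elim: w => [|c w IH]; first by rewrite muln0. 
by rewrite morph_cons size_cat IH Hk mulnS. Qed.

Lemma drop_morph k phi (Hk : forall c, size (phi c) = k) w q :
  drop (k * q) (morph phi w) = morph phi (drop q w).
Proof.
elim: w q => [|c w IH] q; first by rewrite drop_oversize.
case: q => [|q]; first by rewrite muln0 !drop0.
rewrite morph_cons drop_cat Hk /= ltnNge mulnS leq_addr /=.
by rewrite -IH; congr drop; lia.
Qed.

Lemma take_morph k phi (Hk : forall c, size (phi c) = k) w q :
  take (k * q) (morph phi w) = morph phi (take q w).
Proof.
elim: w q => [|c w IH] q; first by rewrite take_oversize.
case: q => [|q]; first by rewrite muln0 !take0.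
rewrite morph_cons take_cat Hk /= ltnNge mulnS leq_addr /=.
rewrite morph_cons -IH.
by rewrite addKn.
Qed.

Lemma block_morph k phi (Hk : forall c, size (phi c) = k) w j :
  j < size w -> take k (drop (k * j) (morph phi w)) = phi (nth la w j).
Proof.
move=> Hj; rewrite drop_morph // (drop_nth la Hj) morph_cons.
by rewrite takel_cat ?Hk // take_oversize ?Hk.
Qed.

Lemma block_lemma k phi (Hk : forall c, size (phi c) = k) v p u s j :
  0 < k ->
  morph phi v = p ++ u ++ s -> size p <= k * j -> k * j + k <= size p + size u ->
  phi (nth la v j) = take k (drop (k * j - size p) u).
Proof.
move=> k0 Hv H1 H2.
have Hj : j < size v.
  have : size (morph phi v) = size (p ++ u ++ s) by rewrite Hv.
  rewrite (size_morph Hk) !size_cat => E.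
  have : k * j < k * size v by lia.
  by rewrite ltn_pmul2l.
rewrite -(block_morph Hk Hj) Hv drop_cat ltnNge H1 /= drop_cat.
case: ifP => H3; last by lia.
by rewrite takel_cat // size_drop; lia.
Qed.
Arguments morph : simpl never.

Lemma inS_infix phi w u u' : infix u u' -> inS phi w u' -> inS phi w u.
Proof. by move=> H [n Hn]; exists n; apply: infix_trans H Hn. Qed.

Lemma infix_morph phi u w : infix u w -> infix (morph phi u) (morph phi w).
Proof.
case/infixP=> [s [s' ->]]; apply/infixP; exists (morph phi s), (morph phi s').
by rewrite !morph_cat.
Qed.

Lemma inS_morph phi w u : inS phi w u -> inS phi w (morph phi u).
Proof. by move=> [n Hn]; exists n.+1; rewrite iterS; apply: infix_morph. Qed.

Lemma inS_base phi w : inS phi w w.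
Proof. by exists 0; apply: infix_refl. Qed.

Lemma normalize k phi (Hk : forall c, size (phi c) = k) v p u s : 0 < k ->
  morph phi v = p ++ u ++ s -> exists v1 p1, infix v1 v /\
  morph phi v1 = p1 ++ u ++ s /\ size p1 = size p %% k.
Proof.
move=> k0 Hv; set q := size p %/ k.
exists (drop q v), (drop (k * q) p); split; first exact: infix_drop.
have Hq : k * q <= size p by rewrite mulnC leq_divM.
split.
  rewrite -(drop_morph Hk) Hv drop_cat.
  case: ifP => H; first by [].
  have -> : k * q = size p by lia.
  by rewrite subnn drop0 drop_size.
by rewrite size_drop {1}(divn_eq (size p) k) mulnC addKn.
Qed.

Lemma desub k phi (Hk : forall c, size (phi c) = k) u : 0 < k ->
  inS phi [:: la] u -> 1 < size u ->
  exists v p s, inS phi [:: la] v /\ morph phi v = p ++ u ++ s /\ size p < k.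
Proof.
move=> k0 [n Hn] Hu; case: n Hn => [|n] Hn.
  by move/size_infix: Hn; rewrite /=; lia.
rewrite iterS in Hn; case/infixP: Hn => [s1 [s2 E]].
have [v1 [p1 [H1 [H2 H3]]]] := normalize Hk k0 E.
exists v1, p1, s2; split; first by exists n.
by rewrite H2 H3 ltn_mod.
Qed.
Arguments morph : simpl never.

Lemma size_morph_take k phi (Hk : forall c, size (phi c) = k) v i :
  i <= size v -> size (morph phi (take i v)) = k * i.
Proof. by move=> H; rewrite (size_morph Hk) size_take_min; congr (_ * _); lia. Qed.

Lemma NC k phi (Hk : forall c, size (phi c) = k) : 0 < k ->
  (forall N, exists u p v s p' v' s', N <= size u /\
     interpretation phi [:: la] u p v s /\ interpretation phi [:: la] u p' v' s' /\
     size p %% k != size p' %% k) -> ~ circular phi [:: la].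
Proof.
move=> k0 H [_ [_ [Z HZ]]].
have [u [p [v [s [p' [v' [s' [Hs [I1 [I2 Hne]]]]]]]]]] := H Z.+1.
have Su : inS phi [:: la] u.
  case: I1 => Sv E; apply: inS_infix (inS_morph Sv).
  by rewrite E; apply: infix_infix.
have [j [Hj Hsync]] := HZ u Su Hs.
have [[i [Hi Ei]] [i' [Hi' Ei']]] := Hsync _ _ _ _ _ _ I1 I2.
have E1 := congr1 size Ei; have E2 := congr1 size Ei'.
rewrite (size_morph_take Hk Hi) size_cat size_take_min in E1.
rewrite (size_morph_take Hk Hi') size_cat size_take_min in E2.
have Hm : minn j (size u) = j by lia.
rewrite Hm in E1 E2.
move/negP: Hne; apply; rewrite -(eqn_modDr j) -E1 -E2.
by rewrite !modnMr.
Qed.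

Lemma morph_nseq k phi c' c : phi c' = nseq k c -> forall n,
  morph phi (nseq n c') = nseq (k * n) c.
Proof.
move=> H; elim=> [|n IH]; first by rewrite muln0.
by rewrite /= morph_cons IH H mulnS nseqD.
Qed.

Lemma nseq_infix M N (c : letter) : M <= N -> infix (nseq M c) (nseq N c).
Proof. move=> H; rewrite -(subnKC H) nseqD; exact: prefix_infix. Qed.

Lemma NCrun k phi (Hk : forall c, size (phi c) = k) c' c : 2 <= k ->
  phi c' = nseq k c -> (forall M, inS phi [:: la] (nseq M c')) ->
  ~ circular phi [:: la].
Proof.
move=> k2 Hc HS; apply: (NC Hk); first lia.
move=> N; exists (nseq N c), [::], (nseq N.+1 c'), (nseq (k * N.+1 - N) c).
exists [:: c], (nseq N.+1 c'), (nseq (k * N.+1 - N.+1) c).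
have HN : N.+1 <= k * N.+1 by rewrite leq_pmull //; lia.
split; first by rewrite size_nseq.
split; first by split; [apply: HS | rewrite (morph_nseq Hc) /= -nseqD; congr nseq; lia].
split; first by split; [apply: HS | rewrite (morph_nseq Hc) -[[:: c] ++ _]/(nseq 1 c ++ _) -!nseqD; congr nseq; lia].
by rewrite /= mod0n modn_small.
Qed.

Lemma inS_pow k phi c' : 2 <= k -> (forall t, inS phi [:: la] (nseq (k ^ t) c')) ->
  forall M, inS phi [:: la] (nseq M c').
Proof.
move=> k2 H M; apply: inS_infix (H M); apply: nseq_infix.
by apply: ltnW; apply: ltn_expl.
Qed.

Lemma no_lb phi : ~ inS phi [:: la] [:: lb] -> phi la = nseq (size (phi la)) la.
Proof.
move=> H; apply/all_pred1P/allP => x Hx.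
case: x Hx => // Hx; exfalso; apply: H.
apply: inS_infix (inS_morph (inS_base phi [:: la])).
by rewrite /morph /= cats0 infix1s.
Qed.

Lemma case_aa k phi (Hk : forall c, size (phi c) = k) : 2 <= k ->
  phi la = nseq k la -> ~ circular phi [:: la].
Proof.
move=> k2 H; apply: (NCrun Hk k2 H); apply: (inS_pow k2).
elim=> [|t IH]; first exact: inS_base.
by rewrite expnS -(morph_nseq H); apply: inS_morph.
Qed.

Lemma case_bb k phi (Hk : forall c, size (phi c) = k) : 2 <= k ->
  phi lb = nseq k lb -> ~ circular phi [:: la].
Proof.
move=> k2 H.
case: (classic (inS phi [:: la] [:: lb])) => Hb; last first.
  by apply: (case_aa Hk k2); rewrite (no_lb Hb) Hk.
apply: (NCrun Hk k2 H); apply: (inS_pow k2).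
elim=> [|t IH]; first exact: Hb.
by rewrite expnS -(morph_nseq H); apply: inS_morph.
Qed.
Arguments morph : simpl never.

Definition flip (c : letter) := if c is la then lb else la.
Fixpoint altw (c : letter) n : word := if n is n'.+1 then c :: altw (flip c) n' else [::].

Lemma flipK c : flip (flip c) = c. Proof. by case: c. Qed.

Lemma size_altw c n : size (altw c n) = n.
Proof. by elim: n c => //= n IH c; rewrite IH. Qed.

Lemma altwD c m n : altw c (m + n) = altw c m ++ altw (iter m flip c) n.
Proof. by elim: m c => //= m IH c; rewrite IH -iterSr iterS. Qed.

Lemma iter_flip m c : iter m flip c = if odd m then flip c else c.
Proof. elim: m => //= m ->; by case: (odd m); rewrite ?flipK. Qed.

Lemma nth_altw c n t : t < n -> nth la (altw c n) t = iter t flip c.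
Proof. by elim: n c t => // n IH c [|t] //= Ht; rewrite IH // -iterSr iterS. Qed.

Lemma alt_altw m x : alt m x (flip x) = altw x m.*2.+1.
Proof.
elim: m => // m IH.
by rewrite /alt doubleS /= -/(alt m x (flip x)) IH flipK.
Qed.

Lemma altw_infix c c' n L : n < L -> infix (altw c n) (altw c' L).
Proof.
move=> H; case: (eqVneq c c') => [->|Hc].
  by rewrite -(subnKC (ltnW H)) altwD; apply: prefix_infix.
have Hc' : c = flip c' by move: Hc; case: c; case: c'.
case: L H => // L H; rewrite -(subnKC (H : n <= L)).
rewrite -[altw c' _.+1]/(c' :: altw (flip c') _) -Hc' altwD -cat1s; apply: infix_infix.
Qed.

Lemma NCalt k phi (Hk : forall c, size (phi c) = k) : 2 <= k ->
  (forall n, exists v, inS phi [:: la] v /\ morph phi v = altw la (k * n)) ->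
  (forall n, exists v, inS phi [:: la] v /\ morph phi v = altw lb (k * n)) ->
  ~ circular phi [:: la].
Proof.
move=> k2 Ha Hb; apply: (NC Hk); first lia.
move=> N; have HN : N.+1 <= k * N.+1 by rewrite leq_pmull //; lia.
have [v [Sv Ev]] := Ha N.+1; have [v' [Sv' Ev']] := Hb N.+1.
exists (altw la N), [::], v, (altw (iter N flip la) (k * N.+1 - N)).
exists [:: lb], v', (altw (iter N flip la) (k * N.+1 - N.+1)).
split; first by rewrite size_altw.
split; first split => //.
  by rewrite Ev cat0s -altwD; congr altw; lia.
split; first split => //.
  rewrite Ev' -(subnKC HN) addSn -[altw lb _.+1]/(lb :: altw la _) -cat1s.
  by rewrite altwD subSS addKn.
by rewrite /= mod0n modn_small.
Qed.

Lemma case_iv k phi (Hk : forall c, size (phi c) = k) : 2 <= k -> odd k ->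
  (forall c, phi c = altw c k) -> ~ circular phi [:: la].
Proof.
move=> k2 ko H.
have M : forall n c, morph phi (altw c n) = altw c (k * n).
  elim=> [|n IH] c; first by rewrite muln0.
  by rewrite /= morph_cons IH H mulnS altwD iter_flip ko.
have S1 : forall t, inS phi [:: la] (altw la (k ^ t)).
  elim=> [|t IH]; first exact: inS_base.
  by rewrite expnS -M; apply: inS_morph.
have S2 : forall c n, inS phi [:: la] (altw c n).
  move=> c n; apply: inS_infix (S1 n.+1); apply: altw_infix.
  apply: ltn_trans (ltnSn n) _; exact: ltn_expl.
by apply: (NCalt Hk k2) => n; [exists (altw la n) | exists (altw lb n)]; rewrite M.
Qed.

Lemma case_v k phi (Hk : forall c, size (phi c) = k) : 2 <= k -> odd k ->
  (forall c, phi c = altw (flip c) k) -> ~ circular phi [:: la].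
Proof.
move=> k2 ko H.
have M : forall n c, morph phi (altw c n) = altw (flip c) (k * n).
  elim=> [|n IH] c; first by rewrite muln0.
  by rewrite /= morph_cons IH H mulnS altwD iter_flip ko.
have S1 : forall t, exists c, inS phi [:: la] (altw c (k ^ t)).
  elim=> [|t [c IH]]; first by exists la; exact: inS_base.
  by exists (flip c); rewrite expnS -M; apply: inS_morph.
have S2 : forall c n, inS phi [:: la] (altw c n).
  move=> c n; have [c' Hc'] := S1 n.+1; apply: inS_infix Hc'; apply: altw_infix.
  apply: ltn_trans (ltnSn n) _; exact: ltn_expl.
by apply: (NCalt Hk k2) => n; [exists (altw lb n) | exists (altw la n)]; rewrite M.
Qed.

Lemma case_iii k phi (Hk : forall c, size (phi c) = k) : 2 <= k ->
  phi la = nseq k lb -> phi lb = nseq k la -> ~ circular phi [:: la].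
Proof.
move=> k2 Ha Hb.
have S : forall t, inS phi [:: la] (nseq (k ^ t) la) /\ inS phi [:: la] (nseq (k ^ t) lb).
  elim=> [|t [IH1 IH2]].
    split; first exact: inS_base.
    apply: inS_infix (inS_morph (inS_base phi [:: la])).
    by rewrite /morph /= cats0 Ha infix1s mem_nseq eqxx andbT; lia.
  by rewrite expnS -(morph_nseq Ha) -(morph_nseq Hb); split; apply: inS_morph.
by apply: (NCrun Hk k2 Hb); apply: (inS_pow k2) => t; case: (S t).
Qed.

Lemma case_i k phi (Hk : forall c, size (phi c) = k) : 2 <= k ->
  phi la = phi lb -> ~ circular phi [:: la].
Proof.
move=> k2 H.
case: (classic (inS phi [:: la] [:: lb])) => Hb; last first.
  by apply: (case_aa Hk k2); rewrite (no_lb Hb) Hk.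
move=> [_ [Hinj _]].
have := Hinj [:: la] [:: lb] (inS_base _ _) Hb.
by rewrite /morph /= H => /(_ erefl).
Qed.
Arguments morph : simpl never.

Lemma letter_cases x c : x = c \/ x = flip c.
Proof. by case: x; case: c; auto. Qed.

Lemma run_infix (w : word) m R c : m + R <= size w ->
  (forall t, t < R -> nth la w (m + t) = c) -> infix (nseq R c) w.
Proof.
move=> Hs H.
have E : take R (drop m w) = nseq R c.
  apply: (@eq_from_nth _ la); first by rewrite size_take_min size_drop size_nseq; lia.
  move=> i; rewrite size_take_min size_drop => Hi.
  have Hi' : i < R by lia.
  by rewrite nth_take // nth_drop nth_nseq Hi' H.
rewrite -E; apply: (infix_trans (infix_take _ _)); exact: infix_drop.
Qed.

Lemma alt_infix (w : word) A c : A <= size w ->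
  (forall t, t < A -> nth la w t = iter t flip c) -> infix (altw c A) w.
Proof.
move=> Hs H.
have E : take A w = altw c A.
  apply: (@eq_from_nth _ la); first by rewrite size_take_min size_altw; lia.
  move=> i; rewrite size_take_min => Hi.
  have Hi' : i < A by lia.
  by rewrite nth_take // nth_altw // H.
rewrite -E; exact: infix_take.
Qed.

Lemma take_drop_nseq k t L (c : letter) : t + k <= L -> take k (drop t (nseq L c)) = nseq k c.
Proof. by move=> H; rewrite drop_nseq take_nseq //; lia. Qed.

Lemma RunBase k phi (Hk : forall c, size (phi c) = k) c : 0 < k ->
  phi la <> nseq k c -> phi lb <> nseq k c -> ~ inS phi [:: la] (nseq k.*2 c).
Proof.
move=> k0 Ha Hb HS.
have [v [p [s [Sv [Ev Hp]]]]] := desub Hk k0 HS ltac:(rewrite size_nseq; lia).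
have := block_lemma (j := 1) Hk k0 Ev ltac:(lia) ltac:(rewrite size_nseq; lia).
rewrite take_drop_nseq; last by lia.
by case: (nth la v 1).
Qed.

Lemma RunLift k phi (Hk : forall c, size (phi c) = k) c c' R : 0 < k ->
  phi c' = nseq k c -> phi (flip c') <> nseq k c ->
  ~ inS phi [:: la] (nseq R c') -> ~ inS phi [:: la] (nseq (k * R.+2) c).
Proof.
move=> k0 H1 H2 HR HS.
have [v [p [s [Sv [Ev Hp]]]]] := desub Hk k0 HS ltac:(rewrite size_nseq; nia).
apply: HR; apply: inS_infix Sv; apply: (@run_infix _ 1).
  have := congr1 size Ev; rewrite (size_morph Hk) !size_cat size_nseq => E.
  nia.
move=> t Ht.
have := block_lemma (j := 1 + t) Hk k0 Ev ltac:(nia) ltac:(rewrite size_nseq; nia).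
rewrite take_drop_nseq; last by nia.
by case: (letter_cases (nth la v (1 + t)) c') => -> // /H2.
Qed.

Lemma nseq_notS phi R R' c : R <= R' -> ~ inS phi [:: la] (nseq R c) -> ~ inS phi [:: la] (nseq R' c).
Proof. by move=> H H1 H2; apply: H1; apply: inS_infix H2; apply: nseq_infix. Qed.

Lemma run_bound k phi (Hk : forall c, size (phi c) = k) : 2 <= k ->
  phi la <> nseq k la -> phi lb <> nseq k lb -> ~ (phi la = nseq k lb /\ phi lb = nseq k la) ->
  forall c, ~ inS phi [:: la] (nseq (k * (k.*2).+2) c).
Proof.
move=> k2 Ha Hb Hab.
have k0 : 0 < k by lia.
have le1 : k.*2 <= k * (k.*2).+2 by nia.
case: (eqVneq (phi lb) (nseq k la)) => [Eb|Nb].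
  have Hb' : ~ inS phi [:: la] (nseq k.*2 lb).
    by apply: (RunBase Hk) => // Ea; apply: Hab.
  case=> //; first exact: (RunLift Hk k0 Eb Ha Hb').
  exact: (nseq_notS le1 Hb').
case: (eqVneq (phi la) (nseq k lb)) => [Ea|Na].
  have Ha' : ~ inS phi [:: la] (nseq k.*2 la).
    by apply: (RunBase Hk) => // /eqP; rewrite (negbTE Nb).
  case=> //; last exact: (RunLift Hk k0 Ea Hb Ha').
  exact: (nseq_notS le1 Ha').
case.
  apply: (nseq_notS le1); apply: (RunBase Hk) => // /eqP; by rewrite (negbTE Nb).
apply: (nseq_notS le1); apply: (RunBase Hk) => // /eqP; by rewrite (negbTE Na).
Qed.
Arguments morph : simpl never.

Lemma take_drop_altw k t L c : t + k <= L ->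
  take k (drop t (altw c L)) = altw (iter t flip c) k.
Proof.
move=> H; rewrite -(subnKC (leq_trans (leq_addr k t) H)) altwD drop_size_cat ?size_altw //.
by rewrite -(subnKC (_ : k <= L - t)) ?altwD ?take_size_cat ?size_altw //; lia.
Qed.

Lemma phi_inj_letter (phi : letter -> word) x y : phi la <> phi lb -> phi x = phi y -> x = y.
Proof. by case: x; case: y => // H E; exfalso; apply: H. Qed.

Lemma alt_bound k phi (Hk : forall c, size (phi c) = k) R : 2 <= k ->
  0 < R -> phi la <> phi lb -> (forall c, ~ inS phi [:: la] (nseq R c)) ->
  ~ (exists m, 1 <= m /\ k = m.*2.+1 /\ phi la = alt m la lb /\ phi lb = alt m lb la) ->
  ~ (exists m, 1 <= m /\ k = m.*2.+1 /\ phi la = alt m lb la /\ phi lb = alt m la lb) ->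
  forall c, ~ inS phi [:: la] (altw c (k * R.+3)).
Proof.
move=> k2 R0 Hne HR H4 H5 c HS.
have k0 : 0 < k by lia.
have [v [p [s [Sv [Ev Hp]]]]] := desub Hk k0 HS ltac:(rewrite size_altw; nia).
have B : forall j, 1 <= j <= R.+1 ->
    phi (nth la v j) = altw (iter (k * j - size p) flip c) k.
  move=> j Hj; rewrite (block_lemma (j := j) Hk k0 Ev); first last.
  - by rewrite size_altw; nia.
  - by nia.
  by rewrite take_drop_altw //; nia.
case Ko: (odd k).
  have B1 := B 1 ltac:(lia); have B2 := B 2 ltac:(lia).
  set e := iter (k * 1 - size p) flip c in B1.
  have Ee : iter (k * 2 - size p) flip c = flip e.
    have O1 : odd (k * 1 - size p) = ~~ odd (size p) by rewrite oddB ?oddM ?Ko //; lia.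
    have O2 : odd (k * 2 - size p) = odd (size p) by rewrite oddB ?oddM ?Ko //; lia.
    by rewrite /e !iter_flip O1 O2; case: (odd (size p)); rewrite /= ?flipK.
  rewrite Ee in B2; clear Ee; clearbody e.
  have Hm : k = (k./2).*2.+1 by move: (odd_double_half k); rewrite Ko; lia.
  have m1 : 1 <= k./2 by lia.
  have Aa : forall x, alt k./2 x (flip x) = altw x k by move=> x; rewrite alt_altw -Hm.
  case: (letter_cases (nth la v 1) la) => V1; case: (letter_cases (nth la v 2) la) => V2;
    rewrite V1 in B1; rewrite V2 in B2.
  - have := congr1 (nth la ^~ 0) (etrans (esym B1) B2).
    clear B1 B2 B; by case: (k) k0 => //= ? _; case: e.
  - case: (letter_cases e la) => Ve; rewrite Ve in B1 B2.
    + by apply: H4; exists k./2; rewrite !Aa /=.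
    + by apply: H5; exists k./2; rewrite !Aa /=.
  - case: (letter_cases e la) => Ve; rewrite Ve in B1 B2.
    + by apply: H5; exists k./2; rewrite !Aa /=.
    + by apply: H4; exists k./2; rewrite !Aa /=.
  - have := congr1 (nth la ^~ 0) (etrans (esym B1) B2).
    clear B1 B2 B; by case: (k) k0 => //= ? _; case: e.
have E : forall j, 1 <= j <= R.+1 -> nth la v j = nth la v 1.
  move=> j Hj; apply: (phi_inj_letter Hne); rewrite (B j Hj) (B 1 ltac:(lia)).
  have kj : k <= k * j by rewrite leq_pmulr //; case/andP: Hj.
  have O1 : odd (k * j - size p) = odd (size p) by rewrite oddB ?oddM ?Ko //; lia.
  have O2 : odd (k * 1 - size p) = odd (size p) by rewrite oddB ?oddM ?Ko //; nia.
  by rewrite !iter_flip O1 O2.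
apply: (HR (nth la v 1)); apply: inS_infix Sv; apply: (@run_infix _ 1).
  have := congr1 size Ev; rewrite (size_morph Hk) !size_cat size_altw => E'.
  nia.
by move=> t Ht; apply: E; lia.
Qed.

Lemma split_eq (a b c d : word) : size a = size c -> a ++ b = c ++ d -> a = c /\ b = d.
Proof. by move=> H /eqP; rewrite eqseq_cat // => /andP [/eqP -> /eqP ->]. Qed.

Lemma catl_inj (s a b : word) : s ++ a = s ++ b -> a = b.
Proof. by move/split_eq => /(_ erefl) []. Qed.

Lemma catr_inj (s a b : word) : size a = size b -> a ++ s = b ++ s -> a = b.
Proof. by move=> H E; case: (split_eq H E). Qed.

Lemma comm_eq n (p q s : word) : size p <= n -> size p = size q -> 0 < size s ->
  p ++ s = s ++ p -> q ++ s = s ++ q -> p = q.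
Proof.
elim: n p q => [|n IH] p q Hn Hs Hs0 Hp Hq.
  by case: p q Hn Hs {Hp Hq} => // - [] //.
case: (leqP (size p) (size s)) => Hps.
  have E1 : p = take (size p) s.
    by have := congr1 (take (size p)) Hp; rewrite take_size_cat // takel_cat.
  have E2 : q = take (size q) s.
    by have := congr1 (take (size q)) Hq; rewrite take_size_cat // takel_cat // -Hs.
  by rewrite E1 E2 Hs.
have Ep : p = s ++ drop (size s) p.
  have := congr1 (take (size s)) Hp; rewrite takel_cat ?(ltnW Hps) // take_size_cat // => E.
  by rewrite -{1}(cat_take_drop (size s) p) E.
have Eq : q = s ++ drop (size s) q.
  have := congr1 (take (size s)) Hq; rewrite takel_cat ?(ltnW (leq_trans Hps (eq_leq Hs))) // take_size_cat // => E.
  by rewrite -{1}(cat_take_drop (size s) q) E.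
rewrite Ep Eq; congr (_ ++ _); apply: IH.
- rewrite size_drop; lia.
- by rewrite !size_drop Hs.
- exact: Hs0.
- by apply: (@catl_inj s); rewrite catA -Ep.
- by apply: (@catl_inj s); rewrite catA -Eq.
Qed.

Lemma comb_core (xp xs yp ys : word) : size yp = size xp -> size ys = size xs ->
  0 < size xp -> 0 < size xs -> xp ++ xs <> yp ++ ys ->
  (xs ++ yp = xp ++ xs \/ xs ++ yp = yp ++ ys) ->
  (ys ++ xp = xp ++ xs \/ ys ++ xp = yp ++ ys) ->
  (xs ++ xp = xp ++ xs \/ xs ++ xp = yp ++ ys) -> False.
Proof.
move=> S1 S2 P1 P2 Hne H1 H2 H3.
have Fin : xp = yp -> xs = ys -> False by move=> E1 E2; apply: Hne; rewrite E1 E2.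
have CE := @comm_eq (size xp + size xs).
case: H3 => H3; case: H1 => H1; case: H2 => H2.
- have Ey : yp = xp by apply: (@catl_inj xs); rewrite H1 H3.
  by apply: Fin => //; apply: (@catr_inj xp) => //; rewrite H2 H3.
- have Ey : yp = xp by apply: (@catl_inj xs); rewrite H1 H3.
  apply: Fin => //; apply: (CE _ _ xp); [lia|by []|exact: P1|by rewrite H3|by rewrite H2 Ey].
- have Es : ys = xs by apply: (@catr_inj xp) => //; rewrite H2 H3.
  apply: Fin => //; apply: (CE _ _ xs); [lia|by []|exact: P2|by rewrite H3|by rewrite H1 Es].
- have [Es Ep] : ys = xs /\ xp = yp by apply: split_eq => //; rewrite H2 H1.
  by apply: Fin.
- have [Es Ep] : ys = xs /\ xp = yp by apply: split_eq => //; rewrite H2 H1.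
  by apply: Fin.
- have Es : ys = xs by apply: (@catr_inj xp) => //; rewrite H2 H3.
  subst ys; apply: Fin => //; apply: (CE _ _ (xs ++ xs)); first by lia.
  + by rewrite S1.
  + by rewrite size_cat; lia.
  + by rewrite catA -H1 -catA -H3 catA.
  + by rewrite catA -H3 -catA -H1 catA.
- have Ey : yp = xp by apply: (@catl_inj xs); rewrite H1 H3.
  subst yp; apply: Fin => //; apply: (CE _ _ (xp ++ xp)); first by lia.
  + by [].
  + by rewrite size_cat; lia.
  + by rewrite catA H3 -catA H2 catA.
  + by rewrite catA H2 -catA H3 catA.
- have Es : ys = xs by apply: (@catr_inj xp) => //; rewrite H2 H3.
  by apply: Fin => //; apply: (@catl_inj xs); rewrite H1 H3.
Qed.

Definition Edge (phi : letter -> word) e c1 c2 :=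
  drop e (phi c1) ++ take e (phi c2) = phi la \/ drop e (phi c1) ++ take e (phi c2) = phi lb.

Lemma comb k (phi : letter -> word) (Hk : forall c, size (phi c) = k) e :
  0 < e < k -> phi la <> phi lb ->
  Edge phi e la lb -> Edge phi e lb la -> (Edge phi e la la \/ Edge phi e lb lb) -> False.
Proof.
move=> He Hne Hab Hba Hcc.
have Sx : forall c, size (take e (phi c)) = e by move=> c; rewrite size_take_min Hk; lia.
have Sy : forall c, size (drop e (phi c)) = k - e by move=> c; rewrite size_drop Hk.
have Ex : forall c, phi c = take e (phi c) ++ drop e (phi c) by move=> c; rewrite cat_take_drop.
rewrite /Edge in Hab Hba Hcc.
case: Hcc => Hcc.
  apply: (@comb_core (take e (phi la)) (drop e (phi la)) (take e (phi lb)) (drop e (phi lb)));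
    rewrite ?Sx ?Sy -?Ex //; lia.
apply: (@comb_core (take e (phi lb)) (drop e (phi lb)) (take e (phi la)) (drop e (phi la)));
  rewrite ?Sx ?Sy -?Ex //; try lia.
- by move=> E; apply: Hne.
- by case: Hba; auto.
- by case: Hab; auto.
- by case: Hcc; auto.
Qed.

Lemma flip_neq c : flip c <> c. Proof. by case: c. Qed.

Lemma W_trans (w : word) R A c : (forall c, ~ infix (nseq R c) w) ->
  R.*2 + A <= size w ->
  exists i, i.+1 < size w /\ nth la w i = c /\ nth la w i.+1 = flip c.
Proof.
move=> HR Hs; apply: NNPP => H.
have P : forall d i, i + d < size w -> nth la w i = c -> nth la w (i + d) = c.
  elim=> [|d IH] i Hd Hi; first by rewrite addn0.
  have := IH i ltac:(lia) Hi; rewrite addnS => Hc.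
  case: (letter_cases (nth la w (i + d).+1) c) => // Hf.
  by exfalso; apply: H; exists (i + d); split; [lia|split].
case: (letter_cases (nth la w R) c) => HRc.
  apply: (HR c); apply: (@run_infix _ R); first by lia.
  by move=> t Ht; apply: P => //; lia.
apply: (HR (flip c)); apply: (@run_infix _ 0); first by lia.
move=> t Ht; rewrite add0n; case: (letter_cases (nth la w t) c) => // Hc.
have := P (R - t) t ltac:(lia) Hc; rewrite subnKC ?HRc; last by lia.
by move/flip_neq.
Qed.

Lemma W_eq (w : word) A : (forall c, ~ infix (altw c A) w) -> A <= size w ->
  exists i, i.+1 < size w /\ nth la w i = nth la w i.+1.
Proof.
move=> HA Hs; apply: NNPP => H.
have P : forall t, t < size w -> nth la w t = iter t flip (nth la w 0).
  elim=> [|t IH] Ht //; rewrite iterS -IH; last by lia.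
  case: (letter_cases (nth la w t.+1) (nth la w t)) => // Hc.
  by exfalso; apply: H; exists t; split.
apply: (HA (nth la w 0)); apply: alt_infix => // t Ht; apply: P; lia.
Qed.
Arguments morph : simpl never.

Lemma window k (v p u s : word) t : 0 < k -> v = p ++ u ++ s -> size p <= t -> t + k <= size p + size u ->
  take k (drop t v) = take k (drop (t - size p) u).
Proof.
move=> k0 -> H1 H2; rewrite drop_cat ltnNge H1 /= drop_cat.
case: ifP => H3; last by lia.
by rewrite takel_cat // size_drop; lia.
Qed.

Lemma two_blocks k phi (Hk : forall c, size (phi c) = k) v j e : e < k -> j.+1 < size v ->
  take k (drop (k * j + e) (morph phi v)) = drop e (phi (nth la v j)) ++ take e (phi (nth la v j.+1)).
Proof.
move=> He Hj; rewrite addnC -drop_drop (drop_morph Hk) (drop_nth la (ltnW Hj)) (drop_nth la Hj).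
rewrite !morph_cons drop_cat Hk He take_cat size_drop Hk ltnNge leq_subr /=.
by rewrite subKn ?takel_cat ?Hk //; lia.
Qed.

Lemma no_shift k phi (Hk : forall c, size (phi c) = k) R A v1 v2 p1 p2 u s1 s2 :
  2 <= k -> phi la <> phi lb ->
  (forall c, ~ inS phi [:: la] (nseq R c)) -> (forall c, ~ inS phi [:: la] (altw c A)) ->
  inS phi [:: la] v1 -> inS phi [:: la] v2 ->
  morph phi v1 = p1 ++ u ++ s1 -> morph phi v2 = p2 ++ u ++ s2 ->
  size p1 < size p2 -> size p2 < k -> k * (R.*2 + A).+2 <= size u -> False.
Proof.
move=> k2 Hne HR HA S1 S2 E1 E2 Hp12 Hp2 Hu.
have k0 : 0 < k by lia.
set n := size u %/ k.
have Hn1 : n * k <= size u by apply: leq_divM.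
have Hn2 : (R.*2 + A).+2 <= n by rewrite /n leq_divRL // mulnC.
have Sv1 : size u <= k * size v1.
  by have := congr1 size E1; rewrite (size_morph Hk) !size_cat; lia.
have Hnv : n <= size v1 by nia.
set e := k - (size p2 - size p1).
have He : 0 < e < k by lia.
have Ed : forall i, i.+1 < n -> Edge phi e (nth la v1 i) (nth la v1 i.+1).
  move=> i Hi.
  have B2 := block_lemma (j := i.+1) Hk k0 E2 ltac:(nia) ltac:(nia).
  have B1 := two_blocks Hk (j := i) (e := e) ltac:(lia) ltac:(lia) (v := v1).
  rewrite (window k0 E1) in B1; first last.
  - by nia.
  - by nia.
  have Ht : k * i + e - size p1 = k * i.+1 - size p2 by rewrite /e; nia.
  rewrite Ht -B2 in B1.
  by rewrite /Edge -B1; case: (nth la v2 i.+1); auto.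
set w := take n v1.
have Sw : inS phi [:: la] w by apply: inS_infix S1; apply: infix_take.
have szw : size w = n by rewrite size_take_min; lia.
have HRw : forall c, ~ infix (nseq R c) w by move=> c H; apply: (HR c); apply: inS_infix Sw.
have HAw : forall c, ~ infix (altw c A) w by move=> c H; apply: (HA c); apply: inS_infix Sw.
have nthw : forall i, i < n -> nth la w i = nth la v1 i by move=> i Hi; rewrite nth_take.
have [i1 [Hi1 [Ai1 Bi1]]] := @W_trans w R A la HRw ltac:(lia).
have [i2 [Hi2 [Ai2 Bi2]]] := @W_trans w R A lb HRw ltac:(lia).
have [i3 [Hi3 Ci3]] := @W_eq w A HAw ltac:(lia).
rewrite szw in Hi1 Hi2 Hi3.
rewrite !nthw in Ai1 Bi1 Ai2 Bi2 Ci3; try lia.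
apply: (comb Hk He Hne).
- by have := Ed i1 Hi1; rewrite Ai1 Bi1.
- by have := Ed i2 Hi2; rewrite Ai2 Bi2.
- have := Ed i3 Hi3; rewrite -Ci3.
  by case: (nth la v1 i3); auto.
Qed.
Arguments morph : simpl never.

Lemma same_mod k phi (Hk : forall c, size (phi c) = k) R A u p v s p' v' s' :
  2 <= k -> phi la <> phi lb ->
  (forall c, ~ inS phi [:: la] (nseq R c)) -> (forall c, ~ inS phi [:: la] (altw c A)) ->
  k * (R.*2 + A).+2 <= size u ->
  interpretation phi [:: la] u p v s -> interpretation phi [:: la] u p' v' s' ->
  size p %% k = size p' %% k.
Proof.
move=> k2 Hne HR HA Hu [Sv Ev] [Sv' Ev'].
have k0 : 0 < k by lia.
have [v1 [p1 [I1 [E1 Z1]]]] := normalize Hk k0 Ev.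
have [v2 [p2 [I2 [E2 Z2]]]] := normalize Hk k0 Ev'.
have S1 := inS_infix I1 Sv; have S2 := inS_infix I2 Sv'.
have L1 : size p1 < k by rewrite Z1 ltn_mod.
have L2 : size p2 < k by rewrite Z2 ltn_mod.
case: (ltngtP (size p1) (size p2)) => H.
- by exfalso; apply: (no_shift Hk k2 Hne HR HA S1 S2 E1 E2 H L2 Hu).
- by exfalso; apply: (no_shift Hk k2 Hne HR HA S2 S1 E2 E1 H L1 Hu).
- by rewrite -Z1 -Z2 H.
Qed.

Lemma morph_inj k phi (Hk : forall c, size (phi c) = k) u v : 0 < k -> phi la <> phi lb ->
  morph phi u = morph phi v -> u = v.
Proof.
move=> k0 Hne; elim: u v => [|c u IH] [|d v] // E.
- by have := congr1 size E; rewrite !(size_morph Hk) /=; lia.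
- by have := congr1 size E; rewrite !(size_morph Hk) /=; lia.
rewrite !morph_cons in E; have [E1 E2] := split_eq (etrans (Hk c) (esym (Hk d))) E.
by rewrite (phi_inj_letter Hne E1) (IH _ E2).
Qed.

Lemma sync_one k phi (Hk : forall c, size (phi c) = k) u p v s j :
  0 < k -> interpretation phi [:: la] u p v s -> j <= size u -> k %| size p + j ->
  exists i, i <= size v /\ morph phi (take i v) = p ++ take j u.
Proof.
move=> k0 [Sv Ev] Hj Hd.
exists ((size p + j) %/ k).
have Ei : k * ((size p + j) %/ k) = size p + j by rewrite mulnC divnK.
have Sz : size p + size u <= k * size v.
  by have := congr1 size Ev; rewrite (size_morph Hk) !size_cat; lia.
split; first by rewrite -(leq_pmul2l k0) Ei; lia.
rewrite -(take_morph Hk) Ei Ev take_cat ltnNge leq_addr /= addKn takel_cat //.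
Qed.

Lemma circ k phi (Hk : forall c, size (phi c) = k) R A :
  2 <= k -> phi la <> phi lb ->
  (forall c, ~ inS phi [:: la] (nseq R c)) -> (forall c, ~ inS phi [:: la] (altw c A)) ->
  circular phi [:: la].
Proof.
move=> k2 Hne HR HA.
have k0 : 0 < k by lia.
split; first by move=> c E; have := Hk c; rewrite E /=; lia.
split; first by move=> u v _ _; apply: (morph_inj Hk k0 Hne).
exists (k * (R.*2 + A).+2) => u Su Hu.
case: (classic (exists p v s, interpretation phi [:: la] u p v s)) => [[p0 [v0 [s0 I0]]]|N].
  set t := size p0 %% k.
  have Ht : t < k by rewrite ltn_mod.
  exists (if t == 0 then 0 else k - t); split.
    have : k <= k * (R.*2 + A).+2 by rewrite leq_pmulr.
    case: (t == 0); lia.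
  move=> p v s p' v' s' I1 I2.
  have M1 := same_mod Hk k2 Hne HR HA (ltnW Hu) I1 I0.
  have M2 := same_mod Hk k2 Hne HR HA (ltnW Hu) I2 I0.
  have Hjs : (if t == 0 then 0 else k - t) <= size u.
    have : k <= k * (R.*2 + A).+2 by rewrite leq_pmulr.
    case: (t == 0); lia.
  have Dv : forall q, q %% k = t -> k %| q + (if t == 0 then 0 else k - t).
    move=> q Hq; rewrite /dvdn -modnDml Hq.
    case: (eqVneq t 0) => [->|Ht0]; first by rewrite mod0n.
    by rewrite subnKC ?modnn //; lia.
  split; [exact: (sync_one Hk k0 I1 Hjs (Dv _ M1)) | exact: (sync_one Hk k0 I2 Hjs (Dv _ M2))].
exists 0; split => // p v s p' v' s' I1.
by exfalso; apply: N; exists p, v, s.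
Qed.
Unset Implicit Arguments.

Theorem mainTheorem4 (k : nat) (phi : letter -> word) :
  2 <= k -> uniform k phi ->
  (~ circular phi [:: la] <->
   (phi la = phi lb) \/
   (phi la = nseq k la \/ phi lb = nseq k lb) \/
   (phi la = nseq k lb /\ phi lb = nseq k la) \/
   (exists m, 1 <= m /\ k = m.*2.+1 /\ phi la = alt m la lb /\ phi lb = alt m lb la) \/
   (exists m, 1 <= m /\ k = m.*2.+1 /\ phi la = alt m lb la /\ phi lb = alt m la lb)).
Proof.
move=> k2 [Ua Ub].
have Hk : forall c, size (phi c) = k by case.
split.
  move=> Nc; apply: NNPP => H.
  have H1 : phi la <> phi lb by move=> E; apply: H; left.
  have H2 : phi la <> nseq k la by move=> E; apply: H; right; left; left.
  have H3 : phi lb <> nseq k lb by move=> E; apply: H; right; left; right.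
  have H4 : ~ (phi la = nseq k lb /\ phi lb = nseq k la) by move=> E; apply: H; right; right; left.
  have H5 := fun E => H (or_intror (or_intror (or_intror (or_introl E)))).
  have H6 := fun E => H (or_intror (or_intror (or_intror (or_intror E)))).
  have HR := run_bound Hk k2 H2 H3 H4.
  have R0 : 0 < k * (k.*2).+2 by rewrite muln_gt0; apply/andP; split; lia.
  have HA := alt_bound Hk k2 R0 H1 HR H5 H6.
  exact: Nc (circ Hk k2 H1 HR HA).
case=> [E|[[E|E]|[[E1 E2]|[[m [m1 [Ek [E1 E2]]]]|[m [m1 [Ek [E1 E2]]]]]]]].
- exact: case_i Hk k2 E.
- exact: case_aa Hk k2 E.
- exact: case_bb Hk k2 E.
- exact: case_iii Hk k2 E1 E2.
- apply: (case_iv Hk k2); first by rewrite Ek /= odd_double.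
  by case; rewrite ?E1 ?E2 Ek -alt_altw.
- apply: (case_v Hk k2); first by rewrite Ek /= odd_double.
  by case; rewrite ?E1 ?E2 Ek -alt_altw.
Qed.
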